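(* Let $\mathcal{N}$ be a Beeping Network with $n$ nodes and maximum degree $\Delta$, where each node has a unique ID from $[1,n^c]$ for a constant $c\ge 1$ and each node knows $n$ and the parameter $c$. Then there is a deterministic distributed algorithm that solves the Learning Neighborhood problem on $\mathcal{N}$ in $O(\Delta^2\log^2 n)$ beeping rounds.
   Context: A Beeping Network is a network of $n$ nodes whose topology is an undirected graph $G=(V,E)$; $N(v)$ denotes the set of neighbors of $v$. Time is divided into synchronous rounds and all nodes start simultaneously. In each round every node either beeps or listens; a listening node hears ''silence'' if no neighbor beeps and ''noise'' if at least one neighbor beeps, and cannot distinguish one beep from several. Complexity is measured in rounds. Learning Neighborhood: the problem is solved once every node $v$ knows the ID of every node $u\in N(v)$. *)

(* Defs.v *)
From mathcomp Require Import all_boot.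
Set Implicit Arguments. Unset Strict Implicit. Unset Printing Implicit Defensive.

(* A deterministic beeping algorithm, parameterised by the knowledge every node
   has: the network size n and its own ID (the constant c is fixed beforehand,
   so the algorithm may depend on it).  A node's local history is the sequence
   of bits it has heard in the completed rounds (true = "noise").
   - [act n i h]  : does node with ID i beep in the next round, given history h?
   - [out n i h]  : the node's (final) output after history h, None = not yet
                    terminated; Some s = terminates outputting the ID list s. *)
Record beep_alg := BeepAlg {
  act : nat -> nat -> seq bool -> bool;
  out : nat -> nat -> seq bool -> option (seq nat)
}.

Section Exec.
Variables (A : beep_alg) (n : nat) (e : rel 'I_n) (id : 'I_n -> nat).

(* Histories after t synchronous rounds.  A beeping node does not listen
   (records false); a listening node hears noise iff some neighbour beeps. *)
Fixpoint hist (t : nat) : 'I_n -> seq bool :=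
  match t with
  | 0 => fun _ => [::]
  | t'.+1 => fun v =>
      let h := hist t' in
      rcons (h v)
        (~~ act A n (id v) (h v) &&
         [exists u, e v u && act A n (id u) (h u)])
  end.

Definition outputs_at (v : 'I_n) (t : nat) (s : seq nat) : Prop :=
  out A n (id v) (hist t v) = Some s /\
  forall t', t' < t -> out A n (id v) (hist t' v) = None.

Definition knows_neighborhood (v : 'I_n) (s : seq nat) : Prop :=
  forall x, x \in s <-> exists u, e v u /\ id u = x.

Definition learns_within (v : 'I_n) (T : nat) : Prop :=
  exists t s, t <= T /\ outputs_at v t s /\ knows_neighborhood v s.
End Exec.

Definition max_deg (n : nat) (e : rel 'I_n) : nat :=
  \max_(v : 'I_n) #|[set u | e v u]|.

(* Main.v *)
Require Import Defs.
From mathcomp Require Import all_boot ssralg poly finalg finfield zify.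
Set Implicit Arguments. Unset Strict Implicit. Unset Printing Implicit Defensive.
Import GRing.Theory.

Section Code.
Variable F : finFieldType.
Variable D : nat.

Definition ev (j : nat) : F := nth 0%R (enum F) j.
Definition cws (x : nat) : seq F := tval (nth [tuple of nseq D 0%R] (enum {: D.-tuple F}) x).
Definition cw (x : nat) : {poly F} := (\poly_(i < D) nth 0%R (cws x) i)%R.

Lemma ev_inj i j : i < #|F| -> j < #|F| -> ev i = ev j -> i = j.
Proof.
move=> hi hj /eqP; rewrite /ev nth_uniq ?enum_uniq // -?cardE //; by move/eqP.
Qed.

Lemma cw_inj x y : x < #|F| ^ D -> y < #|F| ^ D -> x != y -> cw x != cw y.
Proof.
move=> hx hy nxy; apply/negP => /eqP exy.
have hs : size (enum {: D.-tuple F}) = #|F| ^ D by rewrite -cardE card_tuple.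
have : nth [tuple of nseq D 0%R] (enum {: D.-tuple F}) x !=
       nth [tuple of nseq D 0%R] (enum {: D.-tuple F}) y.
  by rewrite nth_uniq ?enum_uniq ?hs.
move/negP; apply; apply/eqP; apply: val_inj => /=.
apply: (@eq_from_nth _ 0%R); first by rewrite !size_tuple.
move=> i; rewrite size_tuple => hi.
have := congr1 (fun p : {poly F} => (p`_i)%R) exy.
by rewrite /cw !coef_poly hi.
Qed.

Definition bad (x w : nat) : {set 'I_#|F|} :=
  [set j : 'I_#|F| | (cw x).[ev j] == (cw w).[ev j]]%R.

Lemma card_bad x w : x < #|F| ^ D -> w < #|F| ^ D -> x != w -> #|bad x w| <= D.-1.
Proof.
move=> hx hw nxw.
set p := (cw x - cw w)%R.
have pE : p = (\poly_(i < D) (nth 0 (cws x) i - nth 0 (cws w) i))%R.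
  apply/polyP => i; rewrite coefB !coef_poly; by case: ifP; rewrite ?subr0.
have p0 : p != 0%R by rewrite subr_eq0 cw_inj.
set rs := [seq ev (val j) | j <- enum (bad x w)].
have : size rs < size p.
  apply: max_poly_roots => //.
    apply/allP => z /mapP [j]; rewrite mem_enum inE => /eqP hj ->.
    by rewrite rootE /p hornerD hornerN hj subrr.
  rewrite map_inj_in_uniq ?enum_uniq // => i j _ _ /(ev_inj (ltn_ord i) (ltn_ord j)).
  by move=> h; apply: val_inj.
rewrite size_map -cardE => h.
have := size_poly D (fun i => nth 0 (cws x) i - nth 0 (cws w) i)%R.
rewrite -pE => h2; move: (leq_trans h h2); by case: D.
Qed.

Lemma card_bigcup_seq (W : seq nat) (B : nat -> {set 'I_#|F|}) :
  #|\bigcup_(w <- W) B w| <= \sum_(w <- W) #|B w|.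
Proof.
elim: W => [|a W IH]; first by rewrite !big_nil cards0.
rewrite !big_cons cardsU; apply: leq_trans (leq_subr _ _) _.
by rewrite leq_add2l.
Qed.

Lemma mem_bigcup_seq (W : seq nat) (B : nat -> {set 'I_#|F|}) w j :
  w \in W -> j \in B w -> j \in \bigcup_(w <- W) B w.
Proof.
elim: W => [|a W IH] //; rewrite inE big_cons in_setU => /orP [/eqP -> ->//|wW jB].
by rewrite IH ?orbT.
Qed.

Lemma code_gen (x : nat) (W : seq nat) :
  x < #|F| ^ D -> all (fun w => w < #|F| ^ D) W -> x \notin W ->
  size W * D.-1 < #|F| ->
  exists2 r, r < #|F| * #|F| &
    ((cw x).[ev (r %/ #|F|)] == ev (r %% #|F|))%R &&
    all (fun w => (cw w).[ev (r %/ #|F|)] != ev (r %% #|F|))%R W.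
Proof.
move=> hx hW xW hsz.
set U := \bigcup_(w <- W) bad x w.
have hU : #|U| < #|'I_#|F| |.
  rewrite card_ord; apply: leq_ltn_trans (card_bigcup_seq _ _) _.
  apply: leq_ltn_trans hsz.
  have : \sum_(w <- W) #|bad x w| <= \sum_(w <- W) D.-1.
    rewrite big_seq_cond [X in _ <= X]big_seq_cond.
    apply: leq_sum => w /andP [wW _]; apply: card_bad => //.
      by move/allP: hW; apply.
    by apply/negP => /eqP xw; move: xW; rewrite xw wW.
  by rewrite big_const_seq count_predT iter_addn_0 mulnC.
have [j jU] : exists j, j \notin U.
  apply/existsP; rewrite -negb_forall; apply/negP => /forallP hall.
  have : #|'I_#|F| | <= #|U|.
    rewrite -cardsT; apply: subset_leq_card; apply/subsetP => z _; exact: hall.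
  by rewrite leqNgt hU.
have F0 : 0 < #|F| by apply/card_gt0P; exists 0%R.
set y := ((cw x).[ev j])%R.
have iy : index y (enum F) < #|F| by rewrite cardE index_mem mem_enum.
exists (j * #|F| + index y (enum F)).
  have := ltn_ord j; nia.
have hd : (j * #|F| + index y (enum F)) %/ #|F| = j.
  by rewrite divnMDl // divn_small // addn0.
have hm : (j * #|F| + index y (enum F)) %% #|F| = index y (enum F).
  by rewrite modnMDl modn_small.
rewrite hd hm /ev nth_index ?mem_enum // eqxx /=.
apply/allP => w wW; apply/negP => /eqP h.
move/negP: jU; apply; apply: (mem_bigcup_seq wW).
by rewrite inE h.
Qed.
End Code.

Section HistLemmas.
Variables (A : beep_alg) (n : nat) (e : rel 'I_n) (id : 'I_n -> nat).
Lemma size_hist t v : size (hist A e id t v) = t.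
Proof. elim: t v => [|t IH] v //=; by rewrite size_rcons IH. Qed.
Lemma nth_hist T t v : t < T -> nth false (hist A e id T v) t =
  ~~ act A n (id v) (hist A e id t v) &&
  [exists u, e v u && act A n (id u) (hist A e id t u)].
Proof.
elim: T v => [|T IH] v //= ht.
rewrite nth_rcons size_hist; move: ht; rewrite ltnS leq_eqVlt => /orP [/eqP ->|h].
  by rewrite ltnn eqxx.
by rewrite h IH.
Qed.
End HistLemmas.

Definition Fld (m : nat) : finFieldType := s2val (@pPrimePowerField 2 m.+1 isT (ltn0Sn m)).
Lemma card_Fld m : #|Fld m| = 2 ^ m.+1.
Proof. exact: (s2valP' (@pPrimePowerField 2 m.+1 isT (ltn0Sn m))). Qed.

Section Alg.
Variable c : nat.
Definition Dn n := c * (trunc_log 2 n).+1.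
Definition sn n := (trunc_log 2 (Dn n)).+1.
Definition Fk n k : finFieldType := Fld (k + sn n).
Definition len n k := 2 ^ (k + sn n).+1 * 2 ^ (k + sn n).+1.
Definition st n k := \sum_(j < k) len n j.
Definition trans n k x r : bool :=
  let F := Fk n k in ((@cw F (Dn n) x).[ev F (r %/ #|F|)] == ev F (r %% #|F|))%R.
Definition sched n x t :=
  [exists k : 'I_t.+1, (st n k <= t < st n k.+1) && trans n k x (t - st n k)].
Definition Sset n k i (h : seq bool) :=
  [seq x <- iota 1 (n ^ c) | (x != i) &&
     all (fun r => (trans n k x r && ~~ trans n k i r) ==> nth false h (st n k + r))
         (iota 0 (len n k))].
Definition okb n k i h := (st n k.+1 <= size h) && (size (Sset n k i h) <= 2 ^ k).
Definition fk n i h := find (fun k => okb n k i h) (iota 0 (size h)).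
Definition Alg := BeepAlg (fun n i h => sched n i (size h))
  (fun n i h => if fk n i h < size h then Some (Sset n (fk n i h) i h) else None).

Lemma st_succ n k : st n k.+1 = st n k + len n k.
Proof. by rewrite /st big_ord_recr. Qed.
Lemma len_pos n k : 0 < len n k.
Proof. by rewrite /len muln_gt0 expn_gt0. Qed.
Lemma st_mono n k1 k2 : k1 <= k2 -> st n k1 <= st n k2.
Proof.
move/subnKC <-; elim: (k2 - k1) => [|j IH]; first by rewrite addn0.
by rewrite addnS st_succ (leq_trans IH) ?leq_addr.
Qed.
Lemma st_ge n k : k <= st n k.
Proof. elim: k => // k IH; rewrite st_succ; have := len_pos n k; lia. Qed.
Lemma st_lt n k1 k2 t : st n k1.+1 <= t -> t < st n k2.+1 -> k1 < k2.
Proof.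
move=> h1 h2; rewrite ltnNge; apply/negP => h.
have : k2.+1 <= k1.+1 by []. move/(st_mono n); lia.
Qed.

Lemma sched_phase n x k t : st n k <= t < st n k.+1 ->
  sched n x t = trans n k x (t - st n k).
Proof.
move=> /andP [h1 h2]; apply/existsP/idP => [[k' /andP [/andP [h3 h4] htr]]|htr].
  have ek : (k' : nat) = k.
    case: (ltngtP k' k) => // hk.
      have := st_mono n hk; lia.
    have := st_mono n hk; lia.
  by rewrite -ek.
have hk : k < t.+1 by have := st_ge n k; lia.
by exists (Ordinal hk); rewrite /= h1 h2.
Qed.

Lemma bound_st n k : st n k.+1 <= 2 * len n k.
Proof.
elim: k => [|k IH]; first by rewrite st_succ /st big_ord0; lia.
rewrite st_succ; suff : len n k.+1 = 4 * len n k by lia.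
by rewrite /len addSn !expnS; lia.
Qed.

End Alg.

Section MainSec.
Variables (c : nat) (hc : 1 <= c) (n : nat) (e : rel 'I_n) (id : 'I_n -> nat).
Hypotheses (esym : symmetric e) (eirr : irreflexive e) (idinj : injective id)
  (idr : forall v, 1 <= id v <= n ^ c).

Definition bit v t := ~~ sched c n (id v) t && [exists u, e v u && sched c n (id u) t].
Lemma nth_hist' T t v : t < T -> nth false (hist (Alg c) e id T v) t = bit v t.
Proof. move=> ht; rewrite nth_hist //=. rewrite /bit; congr andb; first by rewrite size_hist.
 apply: eq_existsb => u; by rewrite size_hist. Qed.

Definition SG k v := [seq x <- iota 1 (n ^ c) | (x != id v) &&
  all (fun r => (trans c n k x r && ~~ trans c n k (id v) r) ==> bit v (st c n k + r))
      (iota 0 (len c n k))].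

Lemma Sset_hist T k v : st c n k.+1 <= T -> Sset c n k (id v) (hist (Alg c) e id T v) = SG k v.
Proof.
move=> hT; apply: eq_filter => x; congr andb; apply: eq_in_all => r.
rewrite mem_iota add0n => hr; rewrite nth_hist' //.
move: hT; rewrite st_succ; lia.
Qed.

Lemma phaseE k v r : r < len c n k -> bit v (st c n k + r) =
  ~~ trans c n k (id v) r && [exists u, e v u && trans c n k (id u) r].
Proof.
move=> hr.
have hp : st c n k <= st c n k + r < st c n k.+1 by rewrite st_succ; lia.
rewrite /bit (sched_phase (id v) hp) addKn; congr andb.
by apply: eq_existsb => u; rewrite (sched_phase (id u) hp) addKn.
Qed.

Definition Nv v := [set u | e v u].
Definition ids v := [seq id u | u <- enum (Nv v)].

Lemma neigh_in k v u : e v u -> id u \in SG k v.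
Proof.
move=> evu; rewrite mem_filter mem_iota; apply/andP; split; last first.
  by have := idr u; lia.
apply/andP; split.
  apply/negP => /eqP /idinj euv; by move: evu; rewrite euv eirr.
apply/allP => r; rewrite mem_iota add0n => hr; apply/implyP => /andP [h1 h2].
rewrite phaseE // h2 /=; apply/existsP; exists u; by rewrite evu.
Qed.

Lemma bigF k x : x <= n ^ c -> x < #|Fk c n k| ^ Dn c n.
Proof.
move=> hx; rewrite /Fk card_Fld.
have h1 : n < 2 ^ (trunc_log 2 n).+1 by apply: trunc_log_ltn.
have h2 : n ^ c < 2 ^ Dn c n.
  rewrite /Dn mulnC expnM ltn_exp2r //; lia.
apply: (leq_ltn_trans hx); apply: (leq_trans h2).
rewrite leq_exp2r /Dn ?muln_gt0 //; last by rewrite hc.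
by rewrite (leq_exp2l 1) //.
Qed.

Lemma neigh_out k v x : #|Nv v| <= 2 ^ k -> x \in SG k v -> exists u, e v u /\ id u = x.
Proof.
move=> hdeg xS.
case: (boolP [exists u, e v u && (id u == x)]) => [/existsP [u /andP [h /eqP <-]]|hno].
  by exists u.
exfalso.
move: xS; rewrite mem_filter mem_iota => /andP [/andP [xv /allP hall] /andP [x1 xn]].
have xn' : x <= n ^ c by lia.
have hA : all (fun w => w < #|Fk c n k| ^ Dn c n) (id v :: ids v).
  apply/allP => w; rewrite inE => /orP [/eqP ->|/mapP [u _ ->]]; apply: bigF;
  [have := idr v | have := idr u]; lia.
have hB : x \notin id v :: ids v.
  rewrite inE negb_or xv /=; apply/negP => /mapP [u]; rewrite mem_enum inE => evu xu.
  by move/negP: hno; apply; apply/existsP; exists u; rewrite evu xu eqxx.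
have hC : size (id v :: ids v) * (Dn c n).-1 < #|Fk c n k|.
  rewrite /= size_map -cardE /Fk card_Fld.
  have hs : Dn c n < 2 ^ sn c n by apply: trunc_log_ltn.
  rewrite expnS expnD.
  have : 1 <= 2 ^ k by rewrite expn_gt0.
  nia.
have [r hr /andP [htx hW]] := @code_gen (Fk c n k) (Dn c n) x (id v :: ids v)
  (bigF k xn') hA hB hC.
have hr' : r < len c n k by move: hr; rewrite /Fk card_Fld.
move: hW => /= /andP [hWv /allP hWu].
have := hall r; rewrite mem_iota add0n hr' => /(_ isT).
rewrite /trans htx hWv /= phaseE // => /andP [_ /existsP [u /andP [evu htu]]].
have : id u \in ids v by apply: map_f; rewrite mem_enum inE.
by move/hWu; move: htu; rewrite /trans => ->.
Qed.
Lemma uniq_ids v : uniq (ids v).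
Proof. by rewrite map_inj_uniq ?enum_uniq. Qed.
Lemma size_ids v : size (ids v) = #|Nv v|.
Proof. by rewrite size_map -cardE. Qed.

Lemma ok_deg k v : size (SG k v) <= 2 ^ k -> #|Nv v| <= 2 ^ k.
Proof.
move=> h; rewrite -size_ids; apply: leq_trans h; apply: uniq_leq_size; first exact: uniq_ids.
move=> x /mapP [u]; rewrite mem_enum inE => evu ->; exact: neigh_in.
Qed.

Lemma deg_ok k v : #|Nv v| <= 2 ^ k -> size (SG k v) <= 2 ^ k.
Proof.
move=> h; apply: (leq_trans _ (leqnn _ : _ <= 2 ^ k)) ; move: (h); apply: leq_trans; rewrite -size_ids; apply: uniq_leq_size.
  by rewrite filter_uniq ?iota_uniq.
move=> x /(neigh_out h) [u [evu <-]]; apply: map_f; by rewrite mem_enum inE.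
Qed.

Lemma knows k v : #|Nv v| <= 2 ^ k -> knows_neighborhood e id v (SG k v).
Proof.
move=> h x; split; first exact: neigh_out.
by move=> [u [evu <-]]; apply: neigh_in.
Qed.

Lemma find_iota_eq (a : pred nat) t kv : kv < t -> a kv -> (forall k, k < kv -> ~~ a k) ->
  find a (iota 0 t) = kv.
Proof.
move=> hkv hakv hbef.
have hhas : has a (iota 0 t) by apply/hasP; exists kv => //; rewrite mem_iota.
have hlt : find a (iota 0 t) < t by rewrite -[X in _ < X](size_iota 0 t) -has_find.
have hnth := nth_find 0 hhas; rewrite nth_iota // add0n in hnth.
case: (ltngtP (find a (iota 0 t)) kv) => // h.
  by move: (hbef _ h); rewrite hnth.
by have := before_find 0 h; rewrite nth_iota // ?add0n hakv //; lia.
Qed.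

Lemma learns v k0 : #|Nv v| <= 2 ^ k0 -> learns_within (Alg c) e id v (st c n k0.+1).
Proof.
move=> h0.
have P : exists k, size (SG k v) <= 2 ^ k by exists k0; exact: deg_ok.
case: (ex_minnP P) => kv Pkv minkv.
have kvk0 : kv <= k0 by apply: minkv; exact: deg_ok.
exists (st c n kv.+1), (SG kv v); split; first exact: st_mono.
split; last exact/knows/ok_deg.
have ltkv := st_ge c n kv.+1.
split.
  rewrite /= /fk size_hist.
  rewrite (@find_iota_eq _ _ kv) //.
  - by rewrite ltkv Sset_hist.
  - by rewrite /okb size_hist leqnn Sset_hist.
  move=> k hk; rewrite /okb size_hist; apply/negP => /andP [hst].
  rewrite Sset_hist // => /minkv; lia.
move=> t' ht'; rewrite /= /fk size_hist.
have hnh : ~~ has (fun k => okb c n k (id v) (hist (Alg c) e id t' v)) (iota 0 t').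
  apply/hasPn => k _; rewrite /okb size_hist; apply/negP => /andP [hst].
  rewrite Sset_hist // => /minkv hle.
  have := st_mono c n (hle : kv.+1 <= k.+1); lia.
by rewrite (hasNfind hnh) size_iota ltnn.
Qed.
End MainSec.

Lemma pow_tl x : 2 ^ trunc_log 2 x <= x.+1.
Proof.
case: x => [|x]; first by rewrite trunc_log0.
apply: leq_trans (trunc_logP (isT : 1 < 2) (ltn0Sn x)) _; exact: leqnSn.
Qed.

Theorem theorem2 (c : nat) (hc : 1 <= c) :
  exists (A : beep_alg) (K : nat),
  forall (n : nat) (e : rel 'I_n) (id : 'I_n -> nat),
    symmetric e -> irreflexive e -> injective id ->
    (forall v, 1 <= id v <= n ^ c) ->
    exists T : nat,
      T <= K * (max_deg e).+1 ^ 2 * (trunc_log 2 n).+1 ^ 2 /\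
      forall v : 'I_n, learns_within A e id v T.
Proof.
exists (Alg c), (128 * c ^ 2) => n e id esym eirr idinj idr.
set Dl := max_deg e.
set k0 := (trunc_log 2 Dl).+1.
exists (st c n k0.+1); split; last first.
  move=> v; apply: learns => //.
  have h1 : #|Nv e v| <= Dl.
    rewrite /Dl /max_deg /Nv. exact: (@leq_bigmax_cond _ predT (fun v => #|[set u | e v u]|) v).
  apply: leq_trans h1 _; apply: ltnW; exact: trunc_log_ltn.
apply: leq_trans (bound_st c n k0) _.
have ha := pow_tl Dl.
have hD : 0 < Dn c n by rewrite /Dn muln_gt0 hc.
have hb : 2 ^ trunc_log 2 (Dn c n) <= Dn c n by apply: trunc_logP.
have hX : 2 ^ (k0 + sn c n).+1 <= 8 * Dl.+1 * Dn c n.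
  rewrite expnS expnD /k0 /sn !expnS.
  have := leq_mul ha hb; nia.
rewrite /len.
have := leq_mul hX hX; rewrite /Dn; nia.
Qed.
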